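(* Let $m\in\mathbb{N}$ and let $\frac{m+1}{m}\le\lambda<\frac{m}{m-1}$ (for $m=1$ this condition means $2\le\lambda<+\infty$). Let $f(x)=\lfloor\lambda x\rfloor$ for $x\in\mathbb{R}$, with $f^n$ its $n$-fold iterate. Then: - for each $k\in\{0,1,\dots,m-1\}$, $\lim_{n\to\infty}f^n(x)=k$ for all $x\in\left[\frac{k}{\lambda},\frac{k+1}{\lambda}\right)$; - $\lim_{n\to\infty}f^n(x)=-\infty$ for all $x\in(-\infty,0)$; - $\lim_{n\to\infty}f^n(x)=+\infty$ for all $x\in\left[\frac{m}{\lambda},+\infty\right)$.
   Context: $\lfloor x\rfloor=\max\{m\in\mathbb{Z}: m\le x\}$ denotes the floor function; $\mathbb{N}=\{1,2,\dots\}$. *)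

(* Defs.v *)
From Stdlib Require Import Reals.
Open Scope R_scope.

(* floor function: Int_part x = up x - 1 is the greatest integer <= x *)
Definition Rfloor (x : R) : R := IZR (Int_part x).

Definition flam (lam : R) (x : R) : R := Rfloor (lam * x).

Definition fiter (lam : R) (n : nat) (x : R) : R := Nat.iter n (flam lam) x.

Definition cv_minus_infty (u : nat -> R) : Prop :=
  forall M : R, exists N : nat, forall n : nat, (N <= n)%nat -> u n < M.

(* Main.v *)
Require Import Defs.
From Stdlib Require Import Reals Lra Lia ZArith.
Open Scope R_scope.

Lemma floor_ge (k : Z) (z : R) : IZR k <= z -> IZR k <= Rfloor z.
Proof.
  intro H. unfold Rfloor. destruct (base_Int_part z) as [H1 H2].
  destruct (Z_lt_le_dec (Int_part z) k) as [Hl|Hl].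
  - assert (Int_part z <= k - 1)%Z by lia.
    apply IZR_le in H0. rewrite minus_IZR in H0. lra.
  - apply IZR_le; exact Hl.
Qed.

Lemma floor_le (z : R) : Rfloor z <= z.
Proof. unfold Rfloor. destruct (base_Int_part z). lra. Qed.

Lemma floor_eq (k : Z) (z : R) : IZR k <= z < IZR k + 1 -> Rfloor z = IZR k.
Proof.
  intros [H1 H2]. unfold Rfloor, Int_part.
  assert (E : (k + 1)%Z = up z).
  { apply tech_up; rewrite plus_IZR; lra. }
  rewrite <- E. f_equal. lia.
Qed.

Lemma nat_arch (r : R) : exists N : nat, r < INR N.
Proof.
  destruct (archimed r) as [H1 _].
  destruct (Z_lt_le_dec (up r) 0) as [Hl|Hl].
  - exists 0%nat. simpl. apply IZR_lt in Hl. lra.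
  - exists (Z.to_nat (up r)). rewrite INR_IZR_INZ, Z2Nat.id; lra || lia.
Qed.

Lemma fiter_S lam n x : fiter lam (S n) x = flam lam (fiter lam n x).
Proof. reflexivity. Qed.

Theorem theorem3 (m : nat) (lam : R) (hm : (1 <= m)%nat)
  (hlo : (INR m + 1) / INR m <= lam)
  (hhi : m = 1%nat \/ lam < INR m / (INR m - 1)) :
  (forall k : nat, (k < m)%nat ->
     forall x : R, INR k / lam <= x < (INR k + 1) / lam ->
       Un_cv (fun n => fiter lam n x) (INR k))
  /\ (forall x : R, x < 0 -> cv_minus_infty (fun n => fiter lam n x))
  /\ (forall x : R, INR m / lam <= x -> cv_infty (fun n => fiter lam n x)).
Proof.
  set (a := INR m) in *.
  assert (Ha : 1 <= a) by (apply (le_INR 1); exact hm).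
  assert (Hlo : a + 1 <= lam * a).
  { assert (E : a + 1 = ((a+1)/a)*a) by (field; lra). rewrite E. nra. }
  assert (Hl1 : 1 < lam) by nra.
  split; [|split].
  - intros k Hk x [Hx1 Hx2].
    assert (Hf : flam lam (INR k) = INR k).
    { unfold flam. rewrite INR_IZR_INZ. apply floor_eq.
      rewrite <- INR_IZR_INZ. split.
      - assert (0 <= INR k) by apply pos_INR. nra.
      - destruct (Nat.eq_dec k 0) as [Hk0|Hk0].
        + subst k. simpl. lra.
        + destruct hhi as [E|E]. { lia. }
          assert (Hm2 : (2 <= m)%nat) by lia.
          apply le_INR in Hm2. fold a in Hm2. simpl in Hm2.
          assert (E2 : lam * (a - 1) < a).
          { assert (E3 : a = (a/(a-1))*(a-1)) by (field; lra).
            rewrite E3 at 2. nra. }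
          assert (Hk' : (k + 1 <= m)%nat) by lia. apply le_INR in Hk'.
          rewrite plus_INR in Hk'. simpl in Hk'. fold a in Hk'.
          assert (0 <= INR k) by apply pos_INR.
          assert ((lam - 1) * INR k <= (lam - 1) * (a - 1)) by (apply Rmult_le_compat_l; lra).
          nra. }
    assert (H1 : flam lam x = INR k).
    { unfold flam. rewrite INR_IZR_INZ. apply floor_eq.
      rewrite <- INR_IZR_INZ.
      assert (E1 : INR k = lam * (INR k / lam)) by (field; lra).
      assert (E2 : INR k + 1 = lam * ((INR k + 1) / lam)) by (field; lra).
      split; nra. }
    assert (Hall : forall n, fiter lam (S n) x = INR k).
    { induction n. exact H1. rewrite fiter_S, IHn. exact Hf. }
    intros eps He. exists 1%nat. intros n Hn.
    destruct n; [lia|]. unfold R_dist. rewrite Hall. rewrite Rminus_diag, Rabs_R0. lra.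
  - intros x Hx M.
    assert (Hb : forall n, fiter lam n x <= x + INR n * ((lam - 1) * x)).
    { induction n.
      - simpl. lra.
      - rewrite fiter_S, S_INR. unfold flam.
        pose proof (floor_le (lam * fiter lam n x)).
        assert (0 <= INR n) by apply pos_INR.
        assert (0 <= INR n * ((lam - 1) * (- x))) by (apply Rmult_le_pos; nra).
        assert (fiter lam n x <= x) by nra.
        assert ((lam - 1) * (fiter lam n x - x) <= 0) by nra.
        nra. }
    set (c := - ((lam - 1) * x)).
    assert (Hc : 0 < c) by (unfold c; nra).
    destruct (nat_arch ((x - M) / c)) as [N HN].
    exists N. intros n Hn. apply le_INR in Hn.
    specialize (Hb n). fold c in Hb |- *.
    assert (E : x - M = ((x - M)/c) * c) by (field; lra).
    assert (HNc : (x - M) < INR N * c) by (rewrite E; apply Rmult_lt_compat_r; lra).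
    assert (INR N * c <= INR n * c) by (apply Rmult_le_compat_r; lra).
    unfold c in *. lra.
  - intros x Hx.
    assert (Hb : forall n, a + INR n <= fiter lam (S n) x).
    { induction n.
      - simpl. rewrite Rplus_0_r. unfold flam. unfold a. rewrite INR_IZR_INZ.
        apply floor_ge. rewrite <- INR_IZR_INZ. fold a.
        assert (E1 : a = lam * (a / lam)) by (field; lra). nra.
      - rewrite fiter_S. unfold flam.
        set (y := fiter lam (S n) x) in *.
        assert (Hi : a + INR (S n) = IZR (Z.of_nat (m + S n))).
        { rewrite <- INR_IZR_INZ, plus_INR. reflexivity. }
        rewrite Hi. apply floor_ge. rewrite <- Hi, S_INR.
        assert (0 <= INR n) by apply pos_INR. nra. }
    intros M. destruct (nat_arch M) as [N HN].
    exists (S N). intros n Hn. destruct n; [lia|].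
    specialize (Hb n). assert (Hn' : (N <= n)%nat) by lia. apply le_INR in Hn'.
    lra.
Qed.
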